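(* Let $\mathcal X$ and $\mathcal Y$ be Polish spaces and let $\{\mu_n\}_{n\in\mathbb N}\subset\wp(\mathcal X\times\mathcal Y)$ converge to $\mu$ in the weak-* topology. For each $n$ let $f_n:\mathcal X\to\wp_w(\mathcal Y)$ be the measurable map $f_n(x)=\mu_n(\cdot\mid x)$, and let $f:\mathcal X\to\wp_w(\mathcal Y)$ be $f(x)=\mu(\cdot\mid x)$. Let $E\subset\mathcal X$ be the set of all $x\in\mathcal X$ for which there exists a sequence $x_n\to x$ in $\mathcal X$ such that $\{f_n(x_n)\}_{n\in\mathbb N}$ does not converge to $f(x)$ in $\wp_w(\mathcal Y)$. If $\mu^{\mathcal X}(E)=0$, then $\mu_n\to\mu$ in $\wp_I(\mathcal X\times\mathcal Y)$.
   Context: For a Polish space $\mathcal S$, $\wp(\mathcal S)$ denotes the Borel probability measures and $\wp_w(\mathcal S)$ this set with the weak-* topology (weakest topology making $\mu\mapsto\int g\,d\mu$ continuous for all bounded continuous $g$). For $\mu\in\wp(\mathcal X\times\mathcal Y)$, $\mu^{\mathcal X}$ is the marginal and $\mu(\cdot\mid x)$ a regular conditional distribution on $\mathcal Y$ given $x$. Let $\psi(\mu)\in\wp(\mathcal X\times\wp_w(\mathcal Y))$ be $\psi(\mu)(dx,d\zeta)=\delta_{\mu(\cdot\mid x)}(d\zeta)\mu^{\mathcal X}(dx)$. The topology of information on $\wp(\mathcal X\times\mathcal Y)$ is the coarsest topology making $\psi$ continuous into $\wp_w(\mathcal X\times\wp_w(\mathcal Y))$; $\wp_I(\mathcal X\times\mathcal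 Y)$ denotes $\wp(\mathcal X\times\mathcal Y)$ with it. Thus $\mu_n\to\mu$ in $\wp_I$ iff $\psi(\mu_n)\to\psi(\mu)$ weak-*. *)

(* Defs.v *)
From HB Require Import structures.
From mathcomp Require Import all_boot all_order all_algebra.
From mathcomp Require Import all_classical all_reals all_analysis.
From mathcomp Require Import measurable_realfun.
Set Implicit Arguments. Unset Strict Implicit. Unset Printing Implicit Defensive.
Import Order.TTheory GRing.Theory Num.Theory.
Import numFieldNormedType.Exports.
Local Open Scope classical_set_scope.
Local Open Scope ring_scope.

(** Types carrying both a topology and a sigma-algebra.  Whether the
    sigma-algebra is the Borel one is an explicit hypothesis (borel_space). *)
#[short(type="topMeasType")]
HB.structure Definition TopMeasurable d := {T of Measurable d T & Topological T}.

(* the product X * Y carries the product topology and the product sigma-algebra *)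
HB.saturate prod.

Definition borel_space d (T : topMeasType d) : Prop :=
  @measurable d T = <<s [set U : set T | open U] >>.

Section polish.
Context (R : realType) (T : topologicalType).

Definition separable_space : Prop :=
  exists D : set T, countable D /\ closure D = [set: T].

Definition complete_compatible_metric (dist : T -> T -> R) : Prop :=
  [/\ (forall x y, 0 <= dist x y),
      (forall x y, dist x y = 0 <-> x = y),
      (forall x y, dist x y = dist y x),
      (forall x y z, dist x z <= dist x y + dist y z) /\
      (forall A : set T, open A <->
         (forall x, A x -> exists e : R, 0 < e /\ [set y | dist x y < e] `<=` A)) &
      (forall u : nat -> T,
         (forall e : R, 0 < e -> exists N, forall m n, (N <= m)%N -> (N <= n)%N ->
            dist (u m) (u n) < e) ->
         exists x : T, u @ \oo --> x)].

Definition completely_metrizable : Prop :=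
  exists dist : T -> T -> R, complete_compatible_metric dist.

Definition polish_space : Prop := separable_space /\ completely_metrizable.

End polish.

Definition bounded_continuous (R : realType) (T : topologicalType) (h : T -> R) :=
  continuous h /\ exists M : R, forall t, `|h t| <= M.

(** The weak-* topology on the Borel probability measures: the weakest
    topology making nu |-> \int h dnu continuous for all bounded continuous h
    (supremum of the initial topologies of these maps). *)
Section weak_topology_probability.
Context (R : realType) d (T : topMeasType d).

Definition bcfun := {h : T -> R | bounded_continuous h}.

Definition prob_integral (h : bcfun) (nu : probability T R) : \bar R :=
  (\int[nu]_t (sval h t)%:E)%E.

Definition weak_prob : Type :=
  sup_topology (fun h : bcfun => Topological.on (initial_topology (prob_integral h))).

HB.instance Definition _ := Topological.on weak_prob.

End weak_topology_probability.

Section marginal.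
Context d1 d2 (T1 : measurableType d1) (T2 : measurableType d2) (R : realType).
Variable mu : probability (T1 * T2)%type R.

Definition marginal : set T1 -> \bar R := pushforward mu fst.

Let marginal0 : marginal set0 = 0%E.
Proof. by rewrite /marginal /pushforward preimage_set0 measure0. Qed.

Let marginal_ge0 A : (0 <= marginal A)%E.
Proof. exact: measure_ge0. Qed.

Let marginal_sigma_additive : semi_sigma_additive marginal.
Proof.
move=> F mF tF mUF; rewrite /marginal /pushforward preimage_bigcup.
apply: measure_semi_sigma_additive.
- by move=> n; rewrite -[X in measurable X]setTI; exact: measurable_fst.
- apply/trivIsetP => /= i j _ _ ij; rewrite -preimage_setI.
  by move/trivIsetP : tF => /(_ _ _ _ _ ij) ->//; rewrite preimage_set0.
- by rewrite -preimage_bigcup -[X in measurable X]setTI; exact: measurable_fst.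
Qed.

HB.instance Definition _ := isMeasure.Build _ _ _ marginal
  marginal0 marginal_ge0 marginal_sigma_additive.

Let marginal_setT : marginal [set: T1] = 1%E.
Proof. by rewrite /marginal /pushforward preimage_setT probability_setT. Qed.

HB.instance Definition _ := Measure_isProbability.Build _ _ _ marginal marginal_setT.

(** [k] is a regular conditional distribution of mu on T2 given x : T1,
    i.e. k x = mu(. | x). *)
Definition regular_conditional (k : T1 -> probability T2 R) : Prop :=
  (forall B : set T2, measurable B -> measurable_fun [set: T1] ((fun x => k x B) : T1 -> \bar R)) /\
  (forall (A : set T1) (B : set T2), measurable A -> measurable B ->
     mu (A `*` B) = (\int[marginal]_(x in A) k x B)%E).

End marginal.

(* Main.v *)
Require Import Defs.
From HB Require Import structures.
From mathcomp Require Import all_boot all_order all_algebra.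
From mathcomp Require Import all_classical all_reals all_analysis.
From mathcomp Require Import measurable_realfun.
From mathcomp Require Import ring lra.
Set Implicit Arguments. Unset Strict Implicit. Unset Printing Implicit Defensive.
Import Order.TTheory GRing.Theory Num.Theory.
Import numFieldNormedType.Exports.
Local Open Scope classical_set_scope.
Local Open Scope ring_scope.

Lemma probT d (T : measurableType d) (R : realType) (m : probability T R) :
  (m [set: T] = 1)%E.
Proof. exact: probability_setT. Qed.

Section inner_integral.
Local Open Scope ereal_scope.
Context d (T : measurableType d) (R : realType) (m : probability T R).

Lemma nn_mono (f g : T -> \bar R) : (forall x, 0 <= f x) -> (forall x, f x <= g x) ->
  \int[m]_x f x <= \int[m]_x g x.
Proof.
move=> f0 fg; have g0 x : 0 <= g x by apply: le_trans (fg x).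
rewrite !ge0_integralE//; apply: ge_ereal_sup => _ [h /= hf <-].
apply: ereal_sup_ubound; exists h => //= x; apply: le_trans (hf x) _.
by rewrite /patch; case: ifP => //.
Qed.

Lemma int_bound (u : T -> R) (M : R) : (forall x, `|u x| <= M)%R ->
  \int[m]_x ((EFin \o u)^\+ x) <= M%:E /\ \int[m]_x ((EFin \o u)^\- x) <= M%:E.
Proof.
move=> uM.
have iM : \int[m]_x (cst M%:E) x = M%:E.
  rewrite integral_cst//. have := @probability_setT _ _ _ m. move=> h. rewrite /= in h *. rewrite h. by rewrite mule1.
split; rewrite -iM; apply: nn_mono => x //=.
- rewrite funeposE /= ge_max lee_fin (le_trans _ (uM x)) ?ler_norm//.
  by rewrite lee_fin; exact: le_trans (normr_ge0 _) (uM x).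
- rewrite funenegE /= ge_max lee_fin (le_trans _ (uM x)) ?ler_normr ?lexx ?orbT//.
  by rewrite lee_fin; exact: le_trans (normr_ge0 _) (uM x).
Qed.

Lemma int_fin (u : T -> R) (M : R) : (forall x, `|u x| <= M)%R ->
  \int[m]_x (u x)%:E \is a fin_num.
Proof.
move=> uM; have [h1 h2] := int_bound uM.
rewrite integralE fin_numB; apply/andP; split; apply: fin_real; apply/andP; split.
- by apply: lt_le_trans (integral_ge0 _ _) => //= x _; exact: funepos_ge0.
- by apply: le_lt_trans h1 _; exact: ltry.
- by apply: lt_le_trans (integral_ge0 _ _) => //= x _; exact: funeneg_ge0.
- by apply: le_lt_trans h2 _; exact: ltry.
Qed.

Lemma int_mono (u v : T -> R) : (forall x, u x <= v x)%R ->
  \int[m]_x (u x)%:E <= \int[m]_x (v x)%:E.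
Proof.
move=> uv; rewrite integralE [leRHS]integralE; apply: leeB.
- apply: nn_mono => x; first exact: funepos_ge0.
  by rewrite !funeposE /= !ge_max !le_max !lee_fin uv lexx !orbT.
- apply: nn_mono => x; first exact: funeneg_ge0.
  by rewrite !funenegE /= !ge_max !le_max !lee_fin lerN2 uv lexx !orbT.
Qed.

Lemma intN_real (u : T -> R) (M : R) : (forall x, `|u x| <= M)%R ->
  \int[m]_x (- u x)%:E = - \int[m]_x (u x)%:E.
Proof.
move=> uM; have [h1 h2] := int_bound uM.
rewrite -(integralN (f := EFin \o u)) //.
apply: fin_num_adde_defl; rewrite fin_numN; apply: fin_real; apply/andP; split.
- by apply: lt_le_trans (integral_ge0 _ _) => //= x _; exact: funeneg_ge0.
- by apply: le_lt_trans h2 _; exact: ltry.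
Qed.

End inner_integral.

Section distlemmas.
Context (R : realType) (T : topologicalType) (dist : T -> T -> R).
Hypothesis hd : complete_compatible_metric dist.

Lemma dist_ge0 x y : 0 <= dist x y. Proof. by case: hd. Qed.
Lemma dist_xx x : dist x x = 0. Proof. by case: hd => _ h _ _ _; apply/h. Qed.
Lemma dist_sym x y : dist x y = dist y x. Proof. by case: hd. Qed.
Lemma dist_tri x y z : dist x z <= dist x y + dist y z. Proof. by case: hd => _ _ _ []. Qed.
Lemma dist_open (A : set T) : open A <->
  (forall x, A x -> exists e : R, 0 < e /\ [set y | dist x y < e] `<=` A).
Proof. by case: hd => _ _ _ []. Qed.

Lemma dist_ball_open x e : open [set y | dist x y < e].
Proof.
apply/dist_open => y /= hy; exists (e - dist x y); split; first by rewrite subr_gt0.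
move=> z /= hz; have := dist_tri x y z; lra.
Qed.

Lemma dist_ball_nbhs x e : 0 < e -> nbhs x [set y | dist x y < e].
Proof.
move=> e0; apply: open_nbhs_nbhs; split; first exact: dist_ball_open.
by rewrite /= dist_xx.
Qed.

Lemma dist_nbhs x U : nbhs x U -> exists e : R, 0 < e /\ [set y | dist x y < e] `<=` U.
Proof.
rewrite nbhsE => -[B [oB Bx] BU].
have [e [e0 eB]] := (dist_open B).1 oB x Bx.
by exists e; split => // y /eB /BU.
Qed.

Lemma dist_cvg (u : nat -> T) x :
  (forall e, 0 < e -> \forall n \near \oo, dist x (u n) < e) -> u @ \oo --> x.
Proof.
move=> h U /dist_nbhs [e [e0 eU]]; have := h e e0.
by apply: filterS => n /eU.
Qed.

Lemma lip_continuous (h : T -> R) (k : R) : 0 <= k ->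
  (forall x y, h x <= h y + k * dist x y) -> continuous h.
Proof.
move=> k0 hl x; apply/cvgrPdist_lt => e e0.
have r0 : 0 < e / (k + 1) by rewrite divr_gt0 // ltr_wpDl.
have rE : e / (k + 1) * (k + 1) = e by rewrite divfK // gt_eqF // ltr_wpDl.
apply: filterS (dist_ball_nbhs x r0) => y /= hy.
have h1 := hl x y; have h2 := hl y x; rewrite dist_sym in h2.
have h3 : k * dist x y <= k * (e / (k + 1)) by rewrite ler_wpM2l // ltW.
rewrite ltr_norml; apply/andP; split; nra.
Qed.

End distlemmas.

Section key.
Context (R : realType) d (X : topMeasType d).
Hypothesis X_borel : borel_space X.
Variable dist : X -> X -> R.
Hypothesis hd : complete_compatible_metric dist.

Lemma cont_meas (h : X -> R) : continuous h -> measurable_fun setT h.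
Proof.
move=> /continuousP ch; apply: (measurability _ (RGenOpens.measurableE R)).
move=> _ [_ [a [b ->] <-]]; rewrite setTI X_borel; apply: sub_sigma_algebra.
exact/ch/interval_open.
Qed.

Variables (P_ : nat -> probability X R) (P : probability X R).
Hypothesis Hweak : forall h : X -> R, bounded_continuous h ->
  (fun n => \int[P_ n]_x (h x)%:E)%E @ \oo --> (\int[P]_x (h x)%:E)%E.
Variables (G_ : nat -> X -> R) (G : X -> R) (M : R).
Hypothesis G_bd : forall n x, `|G_ n x| <= M.
Hypothesis G_bd' : forall x, `|G x| <= M.
Variable N : set X.
Hypothesis mN : measurable N.
Hypothesis PN : P N = 0%E.
Hypothesis Hseq : forall x, ~ N x -> forall xn : nat -> X, xn @ \oo --> x ->
  (fun n => G_ n (xn n)) @ \oo --> G x.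

Let S k x := [set r : R | exists n y, (k <= n)%N /\ r = G_ n y - k%:R * dist x y].
Let phi k x := sup (S k x).

Let S0 k x : S k x !=set0.
Proof. by exists (G_ k x - k%:R * dist x x), k, x. Qed.

Let Sub k x : ubound (S k x) M.
Proof.
move=> _ [n [y [_ ->]]]; have := G_bd n y; have := dist_ge0 hd x y.
have : 0 <= k%:R :> R by [].
move: (G_ n y) (dist x y) (k%:R : R) => a b c; rewrite ler_norml => c0 b0 /andP[_ aM].
have : 0 <= c * b by rewrite mulr_ge0. lra.
Qed.

Let Shas k x : has_ubound (S k x). Proof. by exists M; exact: Sub. Qed.

Let phi_ge k n x : (k <= n)%N -> G_ n x <= phi k x.
Proof.
move=> kn; apply: ub_le_sup => //; exists n, x; split => //.
by rewrite dist_xx // mulr0 subr0.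
Qed.

Let phi_le k x : phi k x <= M.
Proof. by apply: ge_sup; [exact: S0 | exact: Sub]. Qed.

Let phi_lb k x : - M <= phi k x.
Proof.
apply: le_trans (phi_ge x (leqnn k)); have := G_bd k x; rewrite ler_norml.
by case/andP.
Qed.

Let phi_bd k x : `|phi k x| <= M.
Proof. by rewrite ler_norml phi_lb phi_le. Qed.

Let phi_lip k x y : phi k x <= phi k y + k%:R * dist x y.
Proof.
apply: ge_sup => // _ [n [z [kn ->]]].
have h1 : G_ n z - k%:R * dist y z <= phi k y by apply: ub_le_sup => //; exists n, z.
have h2 := dist_tri hd y x z; rewrite (dist_sym hd y x) in h2.
have h3 : k%:R * dist y z <= k%:R * (dist x y + dist x z) by rewrite ler_wpM2l.
lra.
Qed.

Let phi_cont k : continuous (phi k).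
Proof. by apply: (lip_continuous hd (k := k%:R)) => // x y; exact: phi_lip. Qed.

Let phi_bc k : bounded_continuous (phi k).
Proof. by split; [exact: phi_cont | exists M => x; exact: phi_bd]. Qed.

Let phi_decr x : nonincreasing_seq (phi ^~ x).
Proof.
apply/nonincreasing_seqP => k; apply: ge_sup => // _ [n [y [kn ->]]].
have h1 : G_ n y - k%:R * dist x y <= phi k x.
  by apply: ub_le_sup => //; exists n, y; split => //; exact: ltnW.
have h0 := dist_ge0 hd x y; rewrite -natr1.
have : 0 <= 1 * dist x y by rewrite mul1r. lra.
Qed.

Let M0 : 0 <= M.
Proof. by apply: le_trans (G_bd' (point : X)) ; exact: normr_ge0. Qed.

Let phi_lim x : ~ N x -> forall e, 0 < e -> exists k, phi k x <= G x + e.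
Proof.
move=> Nx e e0; apply: contrapT => H.
have hk k : G x + e < phi k x.
  by rewrite ltNge; apply/negP => h; apply: H; exists k.
have hc k : exists p : nat * X, (k <= p.1)%N /\ G x + e < G_ p.1 p.2 - k%:R * dist x p.2.
  have [r [n [y [kn ->]]] hr] := sup_gt (S0 k x) (hk k).
  by exists (n, y).
have [c hc'] := choice hc.
pose Kf := fix Kf j := if j is j'.+1 then ((c (Kf j')).1).+1 else 1%N.
pose nj j := (c (Kf j)).1; pose yj j := (c (Kf j)).2.
have KfS j : Kf j.+1 = (nj j).+1 by [].
have nK j : (Kf j <= nj j)%N by exact: (hc' (Kf j)).1.
have Kj j : (j < Kf j)%N.
  by elim: j => // j ih; rewrite KfS ltnS (leq_trans ih (nK j)).
have njS j : (nj j < nj j.+1)%N by have := nK j.+1; rewrite KfS.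
have njlt i j : (i < j)%N -> (nj i < nj j)%N.
  elim: j => // j ih; rewrite ltnS leq_eqVlt => /predU1P[->//|/ih h].
  exact: ltn_trans h (njS j).
have njinj i j : nj i = nj j -> i = j.
  move=> hij; case: (ltngtP i j) => // /njlt; rewrite hij ltnn //.
have hdist j : (Kf j)%:R * dist x (yj j) < 2 * M.
  have := (hc' (Kf j)).2; have := G_bd (nj j) (yj j); have := G_bd' x.
  rewrite /nj /yj !ler_norml => /andP[h1 _] /andP[_ h2]; lra.
have hgt j : G x + e < G_ (nj j) (yj j).
  have := (hc' (Kf j)).2; have : 0 <= (Kf j)%:R * dist x (yj j).
    by rewrite mulr_ge0 // (dist_ge0 hd).
  rewrite /nj /yj; lra.
pose xs n := match pselect (exists j, nj j = n) with
  | left h => yj (sval (cid h)) | right _ => x end.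
have xs_nj j : xs (nj j) = yj j.
  rewrite /xs; case: pselect => [h|h]; last by exfalso; apply: h; exists j.
  by case: (cid h) => j' /= /njinj ->.
have xs_cvg : xs @ \oo --> x.
  apply: (dist_cvg hd) => eps eps0.
  pose J := (Num.truncn (2 * M / eps)).+1.
  have hJ : 2 * M < J%:R * eps.
    by rewrite -ltr_pdivrMr // truncnS_gt.
  exists (nj J).+1 => // n /= hn.
  rewrite /xs; case: pselect => [h|_]; last by rewrite (dist_xx hd).
  case: (cid h) => j /= hj.
  have jJ : (J < j)%N.
    rewrite ltnNge; apply/negP; rewrite leq_eqVlt => /predU1P[jJ|/njlt]; subst n.
      by rewrite jJ ltnn in hn.
    by move=> /(ltn_trans hn); rewrite ltnn.
  have KJ : (J%:R : R) <= (Kf j)%:R by rewrite ler_nat; apply: ltnW; apply: ltn_trans jJ (Kj j).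
  have K0 : (0 : R) < (Kf j)%:R by rewrite ltr0n; apply: leq_ltn_trans (Kj j).
  have := hdist j; have d0 := dist_ge0 hd x (yj j).
  move=> hK; rewrite ltNge; apply/negP => hd'.
  have h1 : (Kf j)%:R * eps <= (Kf j)%:R * dist x (yj j) by rewrite ler_wpM2l // ltW.
  have h2 : J%:R * eps <= (Kf j)%:R * eps by rewrite ler_wpM2r // ltW.
  lra.
have := Hseq Nx xs_cvg => /cvgrPdist_lt /(_ e e0) [N0 _ hN0].
have := hN0 (nj N0) (leq_trans (ltnW (Kj N0)) (nK N0)).
rewrite /= xs_nj ltr_norml => /andP[h1 h2]; have := hgt N0; lra.
Qed.

Let phiinf x := inf (range (phi ^~ x)).

Let phi_lbd x : has_lbound (range (phi ^~ x)).
Proof. by exists (- M) => _ [k _ <-]; exact: phi_lb. Qed.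

Let phi_cvg x : phi ^~ x @ \oo --> phiinf x.
Proof. exact: nonincreasing_cvgn (phi_decr x) (phi_lbd x). Qed.

Let phiinf_le k x : phiinf x <= phi k x.
Proof. by apply: ge_inf; [exact: phi_lbd | exists k]. Qed.

Let phiinf_bd x : `|phiinf x| <= M.
Proof.
rewrite ler_norml; apply/andP; split; last exact: le_trans (phiinf_le 0 x) (phi_le 0 x).
by apply: lb_le_inf; [exists (phi 0 x), 0%N | move=> _ [k _ <-]; exact: phi_lb].
Qed.

Let phiinf_G x : ~ N x -> phiinf x <= G x.
Proof.
move=> Nx; apply/ler_addgt0Pr => e e0; have [k hk] := phi_lim Nx e0.
exact: le_trans (phiinf_le k x) hk.
Qed.

Let meas_phi k : measurable_fun setT (phi k).
Proof. apply: cont_meas. exact: phi_cont. Qed.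

Let meas_phiinf : measurable_fun setT phiinf.
Proof. by apply: (measurable_fun_cvg meas_phi) => x _; exact: phi_cvg. Qed.

Let int_phi_cvg : (fun k => \int[P]_x (phi k x)%:E)%E @ \oo --> (\int[P]_x (phiinf x)%:E)%E.
Proof.
have ig : P.-integrable setT (EFin \o cst M).
  apply: measurable_bounded_integrable => //.
    by have h := probT P; rewrite /= in h *; rewrite h ltry.

  exists M; split; first exact: num_real.
  by move=> r rM y _ /=; rewrite ger0_norm // ltW.
have mf_ k : measurable_fun setT (fun x => (phi k x)%:E).
  by apply/measurable_EFinP; exact: meas_phi.
have mf : measurable_fun setT (fun x => (phiinf x)%:E).
  by apply/measurable_EFinP; exact: meas_phiinf.
have ff : {ae P, forall x, setT x -> (fun k => (phi k x)%:E) @ \oo --> (phiinf x)%:E}.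
  apply: aeW => x _; apply/fine_cvgP; split; first exact: nearW.
  exact: phi_cvg.
have fg : {ae P, forall x n, setT x -> (`|(phi n x)%:E| <= (EFin \o cst M) x)%E}.
  by apply: aeW => x n _; rewrite abse_EFin lee_fin; exact: phi_bd.
by case: (dominated_convergence measurableT mf_ mf ff ig fg).
Qed.

Let int_phiinf_G : (\int[P]_x (phiinf x)%:E <= \int[P]_x (G x)%:E)%E.
Proof.
pose H x := phiinf x * \1_(~` N) x + (- M) * \1_N x.
have HN x : ~ N x -> H x = phiinf x.
  move=> Nx; rewrite /H !indicE (mem_set (_ : (~` N) x)) // (memNset Nx).
  by rewrite mulr1 mulr0 addr0.
have HG x : H x <= G x.
  have [Nx|Nx] := pselect (N x); last by rewrite HN //; exact: phiinf_G.
  rewrite /H !indicE (mem_set Nx) (memNset (_ : ~ (~` N) x)); last by move=> /(_ Nx).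
  rewrite mulr0 mulr1 add0r.
  by have := G_bd' x; rewrite ler_norml => /andP[].
have mH : measurable_fun setT H.
  apply: measurable_funD; apply: measurable_funM => //.
  by apply: measurable_indic; exact: measurableC.
rewrite (@ae_eq_integral _ _ _ P setT (fun x => (H x)%:E) (fun x => (phiinf x)%:E)) //.
- exact: int_mono.
- by apply/measurable_EFinP.
- by apply/measurable_EFinP.
- exists N; split => // x /= hx; apply: contrapT => Nx; apply: hx => _.
  by rewrite HN.
Qed.

Lemma cvge_ub (u : nat -> \bar R) (l : \bar R) : l \is a fin_num -> u @ \oo --> l ->
  forall e : R, 0 < e -> \forall n \near \oo, (u n <= l + e%:E)%E.
Proof.
move=> lf; rewrite -(fineK lf) => /fine_cvgP [uf uc] e e0.
move/cvgrPdist_le : uc => /(_ e e0) hc; apply: filterS2 uf hc => n fn.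
rewrite -(fineK fn) /= -EFinD lee_fin ler_norml => /andP[h1 h2]. lra.
Qed.

Lemma key e : 0 < e -> \forall n \near \oo,
  (\int[P_ n]_x (G_ n x)%:E <= \int[P]_x (G x)%:E + e%:E)%E.
Proof.
move=> e0; have e20 : 0 < e / 2 by rewrite divr_gt0.
have [k0 _ hk0] := cvge_ub (int_fin P phiinf_bd) int_phi_cvg e20.
have hw := cvge_ub (int_fin P (phi_bd k0)) (Hweak (phi_bc k0)) e20.
have hn : \forall n \near \oo, (k0 <= n)%N by exists k0.
apply: filterS2 hw hn => n h1 h2.
apply: le_trans (_ : (\int[P]_x (phi k0 x)%:E + (e / 2)%:E <= _)%E).
  apply: le_trans h1; apply: int_mono => x; exact: phi_ge.
apply: le_trans (leeD2r _ (hk0 k0 (leqnn _))) _.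
rewrite -addeA -EFinD -splitr; apply: leeD2r; exact: int_phiinf_G.
Qed.

End key.

Theorem theorem3 (R : realType) (dX dY : measure_display)
  (X : topMeasType dX) (Y : topMeasType dY)
  (X_borel : borel_space X) (Y_borel : borel_space Y)
  (X_polish : polish_space R X) (Y_polish : polish_space R Y)
  (mu_ : nat -> probability (X * Y)%type R) (mu : probability (X * Y)%type R)
  (mu_cvg : (fun n => mu_ n : weak_prob R (X * Y)%type) @ \oo
              --> (mu : weak_prob R (X * Y)%type))
  (f_ : nat -> X -> probability Y R) (f : X -> probability Y R)
  (f_rcd : forall n, regular_conditional (mu_ n) (f_ n))
  (f_rcd' : regular_conditional mu f)
  (E_null : (marginal mu).-negligible
     [set x | exists xn : nat -> X, xn @ \oo --> x /\
                ~ ((fun n => f_ n (xn n) : weak_prob R Y) @ \oo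
                     --> (f x : weak_prob R Y))]) :
  forall g : (X * weak_prob R Y)%type -> R, bounded_continuous g ->
    (fun n => \int[marginal (mu_ n)]_x (g (x, (f_ n x : weak_prob R Y)))%:E)%E @ \oo
      --> (\int[marginal mu]_x (g (x, (f x : weak_prob R Y)))%:E)%E.
Proof.
move=> g [gc [Mg gM]].
have [_ [dist hd]] := X_polish.
have [Nn [mNn PNn EN]] := E_null.
have Hweak (h : X -> R) : bounded_continuous h ->
    (fun n => \int[marginal (mu_ n)]_x (h x)%:E)%E @ \oo -->
    (\int[marginal mu]_x (h x)%:E)%E.
  move=> [hc [Mh hM]].
  have hhbc : bounded_continuous (h \o fst : X * Y -> R).
    split; last by exists Mh => -[a b]; exact: hM.
    by move=> p; apply: continuous_comp; [exact: cvg_fst | exact: hc].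
  pose hh : bcfun R (X * Y)%type := exist _ (h \o fst) hhbc.
  have hcv := (cvg_sup _ _ (fmap_filter _ _)).1 mu_cvg hh.
  have := continuous_cvg _ (@initial_continuous _ _ (prob_integral hh) mu) (hcv _).
  move=> /(_ eventually_filter eventually_filter) hc2.
  have hmeas : measurable_fun setT h := cont_meas X_borel hc.
  have mpE (m : probability (X * Y)%type R) :
      (\int[marginal m]_x (h x)%:E)%E = prob_integral hh m.
    rewrite /prob_integral /= /marginal integral_pushforward //.
    - by apply/measurable_EFinP.
    - rewrite preimage_setT; apply: (measurable_bounded_integrable (f := h \o fst)) => //.
      + by have e := probT m; rewrite /= in e *; rewrite e ltry.
      + exact: measurableT_comp hmeas measurable_fst.
      + exists Mh; split; first exact: num_real.
        by move=> r rM [a b] _ /=; apply: le_trans (hM a) (ltW rM).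
  rewrite mpE; under eq_fun do rewrite mpE.
  exact: hc2.
have Hconv x : ~ Nn x -> forall xn : nat -> X, xn @ \oo --> x ->
    (fun n => g (xn n, (f_ n (xn n) : weak_prob R Y))) @ \oo --> g (x, (f x : weak_prob R Y)).
  move=> Nx xn xnx.
  have fc : (fun n => f_ n (xn n) : weak_prob R Y) @ \oo --> (f x : weak_prob R Y).
    by apply: contrapT => hn; apply: Nx; apply: EN; exists xn.
  have pc : (fun n => (xn n, (f_ n (xn n) : weak_prob R Y))) @ \oo -->
      ((x, (f x : weak_prob R Y)) : X * weak_prob R Y) := cvg_pair xnx fc.
  exact: (continuous_cvg _ (gc _) (pc _ _ _)).
have bd1 n x : `|g (x, (f_ n x : weak_prob R Y))| <= Mg by exact: gM.
have bd2 x : `|g (x, (f x : weak_prob R Y))| <= Mg by exact: gM.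
have bd1' n x : `|- g (x, (f_ n x : weak_prob R Y))| <= Mg by rewrite normrN; exact: gM.
have bd2' x : `|- g (x, (f x : weak_prob R Y))| <= Mg by rewrite normrN; exact: gM.
have Hconv' x : ~ Nn x -> forall xn : nat -> X, xn @ \oo --> x ->
    (fun n => - g (xn n, (f_ n (xn n) : weak_prob R Y))) @ \oo --> - g (x, (f x : weak_prob R Y)).
  by move=> Nx xn xnx; apply: cvgN; exact: Hconv.
have up := key X_borel hd Hweak bd1 bd2 mNn PNn Hconv.
have low := key X_borel hd Hweak bd1' bd2' mNn PNn Hconv'.
have Lf := int_fin (marginal mu) bd2.
rewrite -(fineK Lf); apply/fine_cvgP; split.
  apply: nearW => n /=. exact: (int_fin _ (bd1 n)).
apply/cvgrPdist_le => e e0.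
apply: filterS2 (up e e0) (low e e0) => n h1 h2.
have an := int_fin (marginal (mu_ n)) (bd1 n).
rewrite (intN_real _ (bd1 n)) (intN_real _ bd2) in h2.
rewrite -(fineK an) -(fineK Lf) in h1 h2.
rewrite -EFinD lee_fin in h1.
rewrite -EFinN -EFinN -EFinD lee_fin in h2.
rewrite /= ler_norml; apply/andP; split; lra.
Qed.
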